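(* Let $p$ be a prime, let $g:\mathbb{Z}_p\to[0,1]$ be any function, let $a_1,a_2,\dots,a_k\in\mathbb{Z}_p\setminus\{0\}$ be $k$ non-zero elements, and let $E\ge 0$ be an integer. Then at least one of the following two conclusions holds. (1) (Vanishing generalized balanced function.) There exists a function $h:\mathbb{Z}_p\to[-1,1]$ such that $h(n)\ge 0$ for every $n\in\mathrm{support}(g)$, $h(n)\le 0$ for every $n\notin\mathrm{support}(g)$, $\sum_{n\in\mathbb{Z}_p} h(n)=0$, $\|h\|_1=\sum_{n\in\mathbb{Z}_p}|h(n)|\ge E$, and $\hat h(a_1)=\hat h(a_2)=\cdots=\hat h(a_k)=0$. (2) (Generalized balanced function with small spectral support.) There exists a function $h:\mathbb{Z}_p\to\mathbb{R}$ with $$\mathrm{support}(\hat h)\subseteq\{0\}\cup\{a_1,\dots,a_k\}\cup\{-a_1,\dots,-a_k\},$$ such that, for all but at most $(2k+1)E$ elements $n\in\mathbb{Z}_p$, we have $h(n)>0$ if $n\in\mathrm{support}(g)$ and $h(n)<0$ if $n\notin\mathrm{support}(g)$.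
   Context: $\mathbb{Z}_p=\mathbb{Z}/p\mathbb{Z}$. For a function $f:\mathbb{Z}_p\to\mathbb{C}$, its Fourier transform is $\hat f(a)=\sum_{n\in\mathbb{Z}_p} f(n)\,\omega^{an}$ for $a\in\mathbb{Z}_p$, where $\omega=e^{2\pi i/p}$. For a function $f$, $\mathrm{support}(f)=\{x: f(x)\neq 0\}$, and $\mathrm{support}(g)^c=\mathbb{Z}_p\setminus\mathrm{support}(g)$. *)

(* Defs.v *)
From HB Require Import structures.
From mathcomp Require Import all_boot all_order all_algebra all_field.
Set Implicit Arguments. Unset Strict Implicit. Unset Printing Implicit Defensive.
Import Order.TTheory GRing.Theory Num.Theory.
Local Open Scope ring_scope.

(* omega = e^{2 pi i / p}: p.-root (-1) is the p-th root of -1 with minimal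
   nonnegative argument, i.e. e^{i pi / p}; its square is e^{2 pi i / p}. *)
Definition omega (C : numClosedFieldType) (p : nat) : C := (p.-root (-1)) ^+ 2.

Definition fourier (C : numClosedFieldType) (p : nat) (f : 'F_p -> C) (a : 'F_p) : C :=
  \sum_(n : 'F_p) f n * omega C p ^+ (val a * val n)%N.

(* Main.v *)
Require Import Defs.
From HB Require Import structures.
From mathcomp Require Import all_boot all_order all_algebra all_field.
Set Implicit Arguments. Unset Strict Implicit. Unset Printing Implicit Defensive.
Import Order.TTheory GRing.Theory Num.Theory.
Local Open Scope ring_scope.


Section RealSub.
Variable C : numClosedFieldType.
Definition RR := {x : C | x \is Num.real}.
HB.instance Definition _ := [isSub for (@sval C _ : RR -> C)].

HB.instance Definition _ := [Choice of RR by <:].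
HB.instance Definition _ := [SubChoice_isSubComUnitRing of RR by <:].
HB.instance Definition _ := [SubComUnitRing_isSubIntegralDomain of RR by <:].
HB.instance Definition _ := [SubIntegralDomain_isSubField of RR by <:].

Definition RRle (x y : RR) := val x <= val y.
Definition RRlt (x y : RR) := val x < val y.
Definition RRnorm (x : RR) : RR := Sub `|val x| (normr_real (val x)).

Lemma RR_le0_add x y : RRle 0 x -> RRle 0 y -> RRle 0 (x + y).
Proof. rewrite /RRle /= => *; exact: addr_ge0. Qed.
Lemma RR_le0_mul x y : RRle 0 x -> RRle 0 y -> RRle 0 (x * y).
Proof. rewrite /RRle /= => *; exact: mulr_ge0. Qed.
Lemma RR_le0_anti x : RRle 0 x -> RRle x 0 -> x = 0.
Proof. rewrite /RRle /= => h1 h2; apply: val_inj => /=; apply/eqP; rewrite eq_le h2 h1 //=.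
Qed.
Lemma RR_sub_ge0 x y : RRle 0 (y - x) = RRle x y.
Proof. by rewrite /RRle /= subr_ge0. Qed.
Lemma RR_le0_total x : RRle 0 x || RRle x 0.
Proof. rewrite /RRle /=; exact: (valP x). Qed.
Lemma RR_normN x : RRnorm (- x) = RRnorm x.
Proof. apply: val_inj; by rewrite /= normrN. Qed.
Lemma RR_ge0_norm x : RRle 0 x -> RRnorm x = x.
Proof. rewrite /RRle => h; apply: val_inj => /=; exact: ger0_norm. Qed.
Lemma RR_lt_def x y : RRlt x y = (y != x) && RRle x y.
Proof. by rewrite /RRlt /RRle lt_def. Qed.

HB.instance Definition _ := Num.IntegralDomain_isLeReal.Build RR
  RR_le0_add RR_le0_mul RR_le0_anti RR_sub_ge0 RR_le0_total RR_normN RR_ge0_norm RR_lt_def.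

Check (RR : realFieldType).
Lemma RRleE (x y : RR) : (x <= y) = (val x <= val y). Proof. by []. Qed.
Lemma RRltE (x y : RR) : (x < y) = (val x < val y). Proof. by []. Qed.
Lemma leRR (x y : RR) : (x <= y) = (val x <= val y). Proof. by []. Qed.
Lemma ltRR (x y : RR) : (x < y) = (val x < val y). Proof. by []. Qed.
Lemma valM (x y : RR) : val (x * y) = val x * val y. Proof. by []. Qed.
Lemma valN (x : RR) : val (- x) = - val x. Proof. by []. Qed.
Lemma val1 : val (1 : RR) = 1. Proof. by []. Qed.
Lemma valN1 : val (-1 : RR) = -1. Proof. by []. Qed.
Lemma val0 : val (0 : RR) = 0. Proof. by []. Qed.
Lemma valS (I : finType) (P : pred I) (Fx : I -> RR) :
  val (\sum_(i | P i) Fx i) = \sum_(i | P i) val (Fx i).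
Proof. exact: rmorph_sum. Qed.
Lemma valn n : val (n%:R : RR) = n%:R. Proof. exact: rmorph_nat. Qed.
Definition toR (x : C) : RR := insubd 0 x.
Lemma toRK x : x \is Num.real -> val (toR x) = x.
Proof. by move=> h; rewrite /toR insubdK. Qed.
End RealSub.


Section Farkas.
Variable R : realFieldType.

Lemma bounds_seq (ls us : seq R) :
  (forall l u, l \in ls -> u \in us -> l <= u) ->
  exists t, (forall l, l \in ls -> l <= t) /\ (forall u, u \in us -> t <= u).
Proof.
elim: ls => [|l ls IH] H.
  elim: us {H} => [|u us [t [_ Ht]]]; first by exists 0.
  exists (Order.min t u); split => // v; rewrite inE => /predU1P[->|Hv].
    by rewrite ge_min lexx orbT.
  by rewrite ge_min Ht.
have H' : forall l' u, l' \in ls -> u \in us -> l' <= u.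
  by move=> l' u Hl Hu; apply: H => //; rewrite inE Hl orbT.
have [t [Ht1 Ht2]] := IH H'.
exists (Order.max l t); split.
  move=> v; rewrite inE => /predU1P[->|Hv]; rewrite le_max ?lexx //.
  by rewrite Ht1 ?orbT.
by move=> u Hu; rewrite ge_max Ht2 // andbT; apply: H => //; rewrite inE eqxx.
Qed.

Lemma lin_id (x1 x2 y1 y2 a c : R) :
  (x1 - y1) * a - (y2 - x2) * c = a * x1 + c * x2 - (a * y1 + c * y2).
Proof.
by rewrite !mulrBl opprB (mulrC x1) (mulrC y1) (mulrC x2) (mulrC y2) addrACA opprD.
Qed.

Lemma sum_delta (I : finType) (i0 : I) (F : I -> R) :
  \sum_i (i == i0)%:R * F i = F i0.
Proof.
rewrite (bigD1 i0) //= eqxx mul1r big1 ?addr0 // => i /negbTE ->.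
by rewrite mul0r.
Qed.

Lemma farkas (V : eqType) (ks : seq V) : uniq ks ->
  forall (I : finType) (A : I -> V -> R) (b : I -> R),
  (exists x : V -> R, forall i, \sum_(v <- ks) A i v * x v <= b i) \/
  (exists y : I -> R, (forall i, 0 <= y i) /\
     (forall v, v \in ks -> \sum_i y i * A i v = 0) /\ \sum_i y i * b i < 0).
Proof.
elim: ks => [|d ks IH] Hu I A b.
  case: (boolP [forall i, 0 <= b i]) => [/forallP Hb|/forallPn [i0 Hi0]].
    by left; exists (fun=> 0) => i; rewrite big_nil.
  right; exists (fun i => (i == i0)%:R); split; first by move=> i; rewrite ler0n.
  by split => //; rewrite sum_delta ltNge.
move: Hu => /= /andP[dks Hu].
pose I' := (I + I * I)%type.
pose rho (i' : I') (j : I) : R := match i' with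
  | inl i => if A i d == 0 then (j == i)%:R else 0
  | inr (p, q) => if (0 < A p d) && (A q d < 0)
                  then (- A q d) * (j == p)%:R + A p d * (j == q)%:R else 0 end.
have rhoE (F : I -> R) i' : \sum_j rho i' j * F j = match i' with
  | inl i => if A i d == 0 then F i else 0
  | inr (p, q) => if (0 < A p d) && (A q d < 0)
                  then (- A q d) * F p + A p d * F q else 0 end.
  case: i' => [i|[p q]] /=.
    by case: ifP => _; rewrite ?sum_delta // big1 // => j _; rewrite mul0r.
  case: ifP => _; last by rewrite big1 // => j _; rewrite mul0r.
  rewrite -!sum_delta mulr_sumr mulr_sumr -big_split /=.
  by apply: eq_bigr => j _; rewrite mulrDl !mulrA.
have rho_ge0 i' j : 0 <= rho i' j.
  case: i' => [i|[p q]] /=; first by case: ifP => _; rewrite ?ler0n.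
  case: ifP => // /andP[h1 h2]; apply: addr_ge0; apply: mulr_ge0;
    rewrite ?ler0n ?oppr_ge0 ?ltW //.
pose A' i' v := \sum_j rho i' j * A j v.
pose b' i' := \sum_j rho i' j * b j.
have A'd i' : A' i' d = 0.
  rewrite /A' rhoE; case: i' => [i|[p q]].
    by case: ifP => // /eqP.
  by case: ifP => // _; rewrite mulNr mulrC addNr.
have [[x' Hx']|[y' [Hy1 [Hy2 Hy3]]]] := IH Hu I' A' b'.
-
  pose s i := \sum_(v <- ks) A i v * x' v.
  have Hs i' : \sum_j rho i' j * s j <= b' i'.
    apply: le_trans (Hx' i'); rewrite le_eqVlt; apply/orP; left; apply/eqP.
    rewrite /s /A'; under eq_bigr do rewrite mulr_sumr.
    rewrite exchange_big /=; apply: eq_bigr => v _.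
    by rewrite mulr_suml; apply: eq_bigr => j _; rewrite mulrA.
  pose ls := [seq (s q - b q) / (- A q d) | q <- enum (fun q => A q d < 0)].
  pose us := [seq (b q - s q) / A q d | q <- enum (fun q => 0 < A q d)].
  have Hlu : forall l u, l \in ls -> u \in us -> l <= u.
    move=> l u /mapP[q]; rewrite mem_enum => hq -> /mapP[p]; rewrite mem_enum => hp ->.
    have {}hp : 0 < A p d := hp. have {}hq : A q d < 0 := hq.
    have := Hs (inr (p, q)); rewrite /b' !rhoE hp hq /=.
    set al := A p d; set ga := - A q d => H.
    have gap : 0 < ga by rewrite oppr_gt0.
    rewrite ler_pdivlMr // mulrAC ler_pdivrMr //.
    by rewrite -subr_ge0 lin_id subr_ge0.
  have [t [Ht1 Ht2]] := bounds_seq Hlu.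
  left; exists (fun v => if v == d then t else x' v) => i.
  rewrite big_cons eqxx.
  have -> : \sum_(v <- ks) A i v * (if v == d then t else x' v) = s i.
    rewrite /s big_seq_cond [RHS]big_seq_cond; apply: eq_bigr => v /andP[hv _].
    by case: eqP => // E; move: dks; rewrite -E hv.
  case: (ltgtP (A i d) 0) => hA.
  + have Hi : i \in enum (fun q => A q d < 0) by rewrite mem_enum.
    have := Ht1 _ (map_f (fun q => (s q - b q) / (- A q d)) Hi).
    rewrite ler_pdivrMr ?oppr_gt0 // => H.
    by move: H; rewrite mulrN lerNr opprB mulrC => H; rewrite -lerBrDr.
  + have Hi : i \in enum (fun q => 0 < A q d) by rewrite mem_enum.
    have := Ht2 _ (map_f (fun q => (b q - s q) / A q d) Hi).
    rewrite ler_pdivlMr // => H.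
    by rewrite -lerBrDr mulrC.
  + rewrite hA mul0r add0r.
    by have := Hs (inl i); rewrite /b' !rhoE hA eqxx.
-
  right; exists (fun j => \sum_i' y' i' * rho i' j); split.
    by move=> j; apply: sumr_ge0 => i' _; apply: mulr_ge0.
  have tr (F : I -> R) : \sum_j (\sum_i' y' i' * rho i' j) * F j =
                         \sum_i' y' i' * \sum_j rho i' j * F j.
    under eq_bigr do rewrite mulr_suml; rewrite exchange_big /=.
    by apply: eq_bigr => i' _; rewrite mulr_sumr; apply: eq_bigr => j _; rewrite mulrA.
  split; last by rewrite tr.
  move=> v; rewrite inE => /predU1P[->|hv]; rewrite tr.
    by rewrite big1 // => i' _; have := A'd i'; rewrite /A' => ->; rewrite mulr0.
  exact: Hy2.
Qed.
End Farkas.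



Section Omega.
Variable C : numClosedFieldType.
Variable p : nat.
Hypothesis hp : prime p.
Local Notation w := (omega C p).

Lemma p_gt0 : (0 < p)%N. Proof. exact: prime_gt0. Qed.
Lemma p_gt1 : (1 < p)%N. Proof. exact: prime_gt1. Qed.

Lemma w_p : w ^+ p = 1.
Proof. by rewrite /omega -exprM mulnC exprM rootCK ?p_gt0 // sqrrN expr1n. Qed.

Lemma w_neq1 : w != 1.
Proof.
rewrite /omega sqrf_eq1; apply/norP; split.
  apply/eqP => h; have := rootCK p_gt0 (-1 : C); rewrite h expr1n => /eqP.
  by rewrite -subr_eq0 opprK gt_eqF // addr_gt0 ?ltr01.
apply/eqP => h; have := rootC_lt0 (-1 : C) p_gt1; rewrite h ltrN10.
by [].
Qed.

Lemma w_prim : p.-primitive_root w.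
Proof.
have [m pm mp] := prim_order_exists p_gt0 w_p.
have := hp; case/primeP => _ /(_ m mp) /orP[/eqP m1|/eqP mp']; last by move: pm; rewrite mp'.
by move: pm; rewrite m1 => /prim_expr_order; rewrite expr1 => /eqP; rewrite (negbTE w_neq1).
Qed.

Lemma valFp_lt (c : 'F_p) : (val c < p)%N.
Proof. by rewrite -[X in (_ < X)%N](Fp_cast hp) ltn_ord. Qed.

Lemma wexp_mod m : w ^+ (m %% p) = w ^+ m.
Proof. exact: expr_mod w_p. Qed.

Lemma valFp_add (c d : 'F_p) : val (c + d) = ((val c + val d) %% p)%N.
Proof. by rewrite /=; congr (_ %% _)%N; exact: Fp_cast. Qed.

Lemma wM (c d n : 'F_p) :
  w ^+ (val c * val n) * w ^+ (val d * val n) = w ^+ (val (c + d) * val n).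
Proof.
rewrite -exprD -mulnDl valFp_add.
by rewrite -[RHS]wexp_mod modnMml wexp_mod.
Qed.

Lemma G0 (c : 'F_p) : c != 0 -> \sum_(n : 'F_p) w ^+ (val c * val n) = 0.
Proof.
move=> c0; set z := w ^+ val c.
have -> : \sum_(n : 'F_p) w ^+ (val c * val n) = \sum_(n : 'F_p) z ^+ val n.
  by apply: eq_bigr => n _; rewrite exprM.
have zp : z ^+ p = 1 by rewrite /z -exprM mulnC exprM w_p expr1n.
have z1 : z != 1.
  rewrite /z -(prim_order_dvd w_prim); apply/negP => /(dvdn_leq _) H.
  have vc : (0 < val c)%N by rewrite lt0n; apply: contra_neq c0 => h; exact: val_inj.
  by have := H vc; rewrite leqNgt valFp_lt.
have := subrX1 z (Zp_trunc (pdiv p)).+2; rewrite Fp_cast // zp subrr => /esym/eqP.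
by rewrite mulf_eq0 subr_eq0 (negbTE z1) /= => /eqP.
Qed.

Lemma norm_w : `|w| = 1.
Proof.
apply/eqP; rewrite -(pexpr_eq1 p_gt0) ?normr_ge0 //.
by rewrite -normrX w_p normr1.
Qed.

Lemma w_conj (a n : 'F_p) : (w ^+ (val a * val n))^* = w ^+ (val (- a) * val n).
Proof.
set z := w ^+ (val a * val n).
have h1 : z * z^* = 1 by rewrite -normCK normrX norm_w !expr1n.
have h2 : z * w ^+ (val (- a) * val n) = 1.
  by rewrite /z wM addrN /= mul0n expr0.
by rewrite -[LHS]mulr1 -h2 mulrA (mulrC _ z) h1 mul1r.
Qed.
End Omega.

Lemma sum_delta' (R : realFieldType) (I : finType) (i0 : I) (F : I -> R) :
  \sum_i F i * (i0 == i)%:R = F i0.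
Proof.
rewrite -[RHS](sum_delta i0 F); apply: eq_bigr => i _; by rewrite mulrC eq_sym.
Qed.

Theorem theorem1 (C : numClosedFieldType) (p : nat) (hp : prime p)
  (g : 'F_p -> C) (hg : forall n, 0 <= g n <= 1)
  (k : nat) (a : 'I_k -> 'F_p) (ha : forall i, a i != 0) (E : nat) :
  (exists h : 'F_p -> C,
      (forall n, h n \is Num.real) /\
      (forall n, -1 <= h n <= 1) /\
      (forall n, g n != 0 -> 0 <= h n) /\
      (forall n, g n = 0 -> h n <= 0) /\
      \sum_(n : 'F_p) h n = 0 /\
      E%:R <= \sum_(n : 'F_p) `|h n| /\
      (forall i, fourier h (a i) = 0))
  \/
  (exists h : 'F_p -> C,
      (forall n, h n \is Num.real) /\
      (forall b, fourier h b != 0 -> b = 0 \/ exists i, b = a i \/ b = - a i) /\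
      leq #|[set n : 'F_p | ~~ (if g n != 0 then 0 < h n else h n < 0)]|
         ((2 * k + 1) * E)%N).
Proof.
pose w := omega C p.
pose sg (n : 'F_p) : RR C := if g n != 0 then 1 else -1.
pose phi (j : option ('I_k * bool)) (n : 'F_p) : RR C := match j with
  | None => 1
  | Some (i, true) => toR ('Re (w ^+ (val (a i) * val n)))
  | Some (i, false) => toR ('Im (w ^+ (val (a i) * val n))) end.
pose J := option ('I_k * bool).
pose I := ((('F_p + 'F_p) + (J + J)) + 'I_1)%type.
pose A (r : I) (v : 'F_p) : RR C := match r with
  | inl (inl (inl n)) => (v == n)%:R
  | inl (inl (inr n)) => - (v == n)%:R
  | inl (inr (inl j)) => sg v * phi j v
  | inl (inr (inr j)) => - (sg v * phi j v)
  | inr _ => -1 end.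
pose b (r : I) : RR C := match r with
  | inl (inl (inl _)) => 1
  | inr _ => - E%:R
  | _ => 0 end.
have [[x Hx]|[y [Hy1 [Hy2 Hy3]]]] := farkas (index_enum_uniq 'F_p) A b.
-
  have ux1 n : x n <= 1.
    by have := Hx (inl (inl (inl n))); rewrite /= sum_delta.
  have ux0 n : 0 <= x n.
    have := Hx (inl (inl (inr n))); rewrite /=.
    by under eq_bigr do rewrite mulNr; rewrite sumrN sum_delta oppr_le0.
  have Hj j : \sum_v sg v * phi j v * x v = 0.
    have h1 := Hx (inl (inr (inl j))); have h2 := Hx (inl (inr (inr j))).
    move: h2; rewrite /=; under eq_bigr do rewrite mulNr.
    by rewrite sumrN oppr_le0 => h2; apply/eqP; rewrite eq_le h1 h2.
  have HE : E%:R <= \sum_v x v.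
    have := Hx (inr ord0); rewrite /=.
    by under eq_bigr do rewrite mulN1r; rewrite sumrN lerN2.
  left; exists (fun n => val (sg n * x n)).
  split; first by move=> n; exact: valP.
  split.
    move=> n; rewrite -valN1 -val1 -!leRR /sg.
    case: ifP => _; first by rewrite mul1r ux1 (le_trans _ (ux0 n)) // lerN10.
    by rewrite mulN1r lerN2 ux1 (le_trans _ ler01) // oppr_le0.
  split.
    by move=> n H; rewrite /sg H mul1r -val0 -leRR.
  split.
    by move=> n H; rewrite /sg H eqxx /= mulN1r oppr_le0; exact: (ux0 n).
  split.
    rewrite -valS; have := Hj None; rewrite /=.
    by under eq_bigr do rewrite mulr1; move=> ->.
  split.
    have -> : \sum_n `|val (sg n * x n)| = val (\sum_n x n).
      rewrite valS; apply: eq_bigr => n _; rewrite valM normrM.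
      rewrite [`|val (x n)|]ger0_norm; last exact: (ux0 n).
      by rewrite /sg; case: ifP => _; rewrite ?valN ?normrN normr1 mul1r.
    by rewrite -valn -leRR.
  move=> i; rewrite /fourier.
  have -> : \sum_n val (sg n * x n) * w ^+ (val (a i) * val n) =
     val (\sum_n sg n * phi (Some (i, true)) n * x n) +
     'i * val (\sum_n sg n * phi (Some (i, false)) n * x n).
    rewrite !valS mulr_sumr -big_split; apply: eq_bigr => n _.
    rewrite !valM /phi !toRK ?Creal_Re ?Creal_Im //.
    rewrite {1}[w ^+ _]Crect mulrDr; congr (_ + _); first by rewrite mulrAC.
    by rewrite mulrCA mulrAC.
  by rewrite !Hj val0 mulr0 addr0.
-
  pose Y n := y (inl (inl (inl n))).
  pose Z n := y (inl (inl (inr n))).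
  pose Lam j := y (inl (inr (inl j))) - y (inl (inr (inr j))).
  pose T := y (inr ord0).
  pose W v := \sum_j Lam j * phi j v.
  have key v : Y v = T - sg v * W v + Z v.
    have := Hy2 v (mem_index_enum _).
    rewrite !big_sumType /= big_ord1.
    rewrite sum_delta'.
    under eq_bigr do rewrite mulrN.
    rewrite sumrN sum_delta'.
    have -> : \sum_j y (inl (inr (inl j))) * (sg v * phi j v) +
              \sum_j y (inl (inr (inr j))) * - (sg v * phi j v) = sg v * W v.
      rewrite /W mulr_sumr -big_split /=; apply: eq_bigr => j _.
      by rewrite mulrN -mulrBl mulrCA.
    rewrite mulrN1 => /subr0_eq e.
    have e2 : Y v - Z v = T - sg v * W v by rewrite /T -e /Y /Z addrK.
    by rewrite -e2 subrK.
  have HS : \sum_n Y n < T * E%:R.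
    move: Hy3; rewrite !big_sumType /= big_ord1.
    under [\sum_(i : 'F_p) _ * 1]eq_bigr do rewrite mulr1.
    under [\sum_(i : 'F_p) _ * 0]eq_bigr do rewrite mulr0.
    under [\sum_(i : J) y (inl (inr (inl i))) * 0]eq_bigr do rewrite mulr0.
    under [\sum_(i : J) y (inl (inr (inr i))) * 0]eq_bigr do rewrite mulr0.
    by rewrite !big1_eq !addr0 mulrN subr_lt0.
  have T0 : 0 < T.
    rewrite lt_def Hy1 andbT; apply/eqP => T0; move: HS.
    rewrite T0 mul0r ltNge => /negP; apply; apply: sumr_ge0 => n _; exact: Hy1.
  pose bad := [set v | sg v * W v <= 0].
  have Hbad : (#|bad| < E)%N.
    rewrite -(ltr_nat (RR C)) -(ltr_pM2r T0) (mulrC E%:R).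
    apply: le_lt_trans HS; rewrite mulr_natl -sumr_const.
    rewrite [X in _ <= X](bigID (fun v => v \in bad)) /= -[X in X <= _]addr0.
    apply: lerD; last by apply: sumr_ge0 => v _; exact: Hy1.
    apply: ler_sum => v; rewrite inE => hv.
    rewrite key -addrA lerDl; apply: addr_ge0; last exact: Hy1.
    by rewrite oppr_ge0.
  right; exists (fun n => val (W n)).
  split; first by move=> n; exact: valP.
  split.
    move=> c; case: (boolP (c == 0)) => [/eqP->|c0]; first by left.
    case: (boolP [exists i, (c == a i) || (c == - a i)]) => [/existsP[i /orP[/eqP->|/eqP->]]|Hn].
    + by right; exists i; left.
    + by right; exists i; right.
    move=> H; exfalso; move/negP: H; apply; apply/eqP.
    rewrite /fourier; under eq_bigr do rewrite valS mulr_suml.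
    rewrite exchange_big big1 // => j _.
    under eq_bigr do rewrite valM -mulrA.
    rewrite -mulr_sumr; apply/eqP; rewrite mulf_eq0; apply/orP; right; apply/eqP.
    case: j => [[i []]|]; rewrite /phi.
    + move/existsPn: Hn => /(_ i); rewrite negb_or => /andP[n1 n2].
      have -> : \sum_(n : 'F_p) val (toR ('Re (w ^+ (val (a i) * val n)))) * w ^+ (val c * val n) =
        (\sum_(n : 'F_p) w ^+ (val (a i + c) * val n) +
         \sum_(n : 'F_p) w ^+ (val (- a i + c) * val n)) / 2%:R.
        rewrite -big_split mulr_suml; apply: eq_bigr => n _.
        by rewrite toRK ?Creal_Re // ReE w_conj // mulrAC mulrDl !wM.
      rewrite !G0 ?addr0 ?mul0r //.
        by rewrite addrC subr_eq0.
      by rewrite addrC addr_eq0.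
    + move/existsPn: Hn => /(_ i); rewrite negb_or => /andP[n1 n2].
      have -> : \sum_(n : 'F_p) val (toR ('Im (w ^+ (val (a i) * val n)))) * w ^+ (val c * val n) =
        'i * (\sum_(n : 'F_p) w ^+ (val (- a i + c) * val n) -
         \sum_(n : 'F_p) w ^+ (val (a i + c) * val n)) / 2%:R.
        rewrite -sumrB mulr_sumr mulr_suml; apply: eq_bigr => n _.
        rewrite toRK ?Creal_Im // ImE w_conj // -!mulrA; congr (_ * _).
        by rewrite mulrCA mulrBl !wM // mulrC.
      rewrite !G0 ?subr0 ?mulr0 ?mul0r //.
        by rewrite addrC addr_eq0.
      by rewrite addrC subr_eq0.
    + under eq_bigr do rewrite mul1r.
      exact: G0.
  apply: leq_trans (ltnW (leq_trans Hbad _)).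
    apply: subset_leq_card; apply/subsetP => n; rewrite !inE /sg.
    case: ifP => _.
      by rewrite -val0 -ltRR -leNgt mul1r.
    by rewrite -val0 -ltRR -leNgt mulN1r oppr_le0.
  by rewrite leq_pmull // addn1.
Qed.
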